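(* Let $t\ge 2$ be an integer and let $G_1,G_2,\dots,G_t$ be cyclically orderable graphs with $|V(G_1)|=|V(G_2)|=\cdots=|V(G_t)|$ and $|E(G_1)|=|E(G_2)|=\cdots=|E(G_t)|$. Then any series composition $G_1\oplus G_2\oplus\cdots\oplus G_t$ is cyclically orderable.
   Context: A cyclic base ordering (CBO) of a connected graph $G$ is a bijection $\mathcal{O}:E(G)\to\{1,\dots,|E(G)|\}$ such that for every $i\in\{1,\dots,|E(G)|\}$ the edges $\mathcal{O}^{-1}(i),\dots,\mathcal{O}^{-1}(i+|V(G)|-2)$ (indices taken cyclically modulo $|E(G)|$) induce a spanning tree of $G$; $G$ is cyclically orderable if it has a CBO. Given graphs $G$ and $H$ (vertex-disjoint) with $u\in V(G)$ and $v\in V(H)$, the series composition $G\oplus H$ is the graph obtained from the disjoint union of $G$ and $H$ by identifying $u$ and $v$ into a single vertex (the glued vertices may be chosen arbitrarily). $G_1\oplus G_2\oplus\cdots\oplus G_t$ denotes an iterated series composition $(\cdots((G_1\oplus G_2)\oplus G_3)\cdots)\oplus G_t$ with arbitrary choices of glued vertices at each step. *)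

(* Defs.v *)
From mathcomp Require Import all_boot.
Set Implicit Arguments. Unset Strict Implicit. Unset Printing Implicit Defensive.

(* A finite graph: vertex type, edge type, and the (unordered) pair of
   endpoints of each edge, given as an ordered pair. *)
Record graph := Graph {
  gV : finType;
  gE : finType;
  gends : gE -> gV * gV
}.

Definition adjF (G : graph) (F : {set gE G}) : rel (gV G) :=
  fun x y => [exists e in F, (gends e == (x, y)) || (gends e == (y, x))].

Definition connectedF (G : graph) (F : {set gE G}) : Prop :=
  forall x y : gV G, connect (adjF F) x y.

Definition connected_graph (G : graph) : Prop := connectedF [set: gE G].

(* F is (the edge set of) a spanning tree: (V(G),F) is connected and has
   no cycle, i.e. every edge of F is a bridge of (V(G),F) (a loop is never
   a bridge). *)
Definition spanning_tree (G : graph) (F : {set gE G}) : Prop :=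
  connectedF F /\
  forall e, e \in F -> ~~ connect (adjF (F :\ e)) (gends e).1 (gends e).2.

(* Cyclic base ordering, with positions 0..m-1 instead of 1..m
   (m = |E(G)|, n = |V(G)|): the window starting at i is the set of edges
   whose position lies in {i, i+1, ..., i+n-2} modulo m. *)
Definition window (G : graph) (O : gE G -> 'I_#|gE G|) (i : 'I_#|gE G|)
  : {set gE G} :=
  [set e | ((O e + #|gE G| - i) %% #|gE G| < #|gV G|.-1)%N].

Definition is_CBO (G : graph) (O : gE G -> 'I_#|gE G|) : Prop :=
  bijective O /\ forall i, spanning_tree (window O i).

Definition cyclically_orderable (G : graph) : Prop :=
  connected_graph G /\ exists O : gE G -> 'I_#|gE G|, is_CBO O.

(* Series composition G (+) H identifying u in G with v in H.
   Vertices: V(G) plus V(H) minus v; edges: E(G) + E(H). *)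
Definition sc_V (G H : graph) (v : gV H) : finType :=
  (gV G + {y : gV H | y != v})%type.

Definition sc_map (G H : graph) (u : gV G) (v : gV H) (x : gV H)
  : sc_V G v :=
  match @insub (gV H) (fun y => y != v) {y : gV H | y != v} x with
  | Some y => inr y
  | None => inl u
  end.

Definition sc_ends (G H : graph) (u : gV G) (v : gV H)
  (e : (gE G + gE H)%type) : sc_V G v * sc_V G v :=
  match e with
  | inl e1 => (inl (gends e1).1, inl (gends e1).2)
  | inr e2 => (@sc_map G H u v (gends e2).1, @sc_map G H u v (gends e2).2)
  end.

Definition series (G H : graph) (u : gV G) (v : gV H) : graph :=
  @Graph (sc_V G v) (gE G + gE H)%type (@sc_ends G H u v).

(* iter_series Gs n K : K is some iterated series composition
   (..((Gs 0 (+) Gs 1) (+) Gs 2) ..) (+) Gs (n-1), with arbitrary choices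
   of the glued vertices at each step. *)
Inductive iter_series (Gs : nat -> graph) : nat -> graph -> Prop :=
| iter_series_1 : iter_series Gs 1 (Gs 0)
| iter_series_S : forall n K (u : gV K) (v : gV (Gs n)),
    iter_series Gs n K -> iter_series Gs n.+1 (@series K (Gs n) u v).

(* Main.v *)
Require Import Defs.
From mathcomp Require Import all_boot zify.
Set Implicit Arguments. Unset Strict Implicit. Unset Printing Implicit Defensive.

Lemma connect_homo (T1 T2 : finType) (e1 : rel T1) (e2 : rel T2) (h : T1 -> T2) :
  (forall a b, e1 a b -> connect e2 (h a) (h b)) ->
  forall x y, connect e1 x y -> connect e2 (h x) (h y).
Proof.
move=> He x y /connectP [p pth ->]; elim: p x pth => [|z p IH] x /=; first by rewrite connect0.
case/andP=> exz pth; apply: connect_trans (He _ _ exz) (IH _ pth).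
Qed.

Lemma adjF_sym G F : symmetric (@adjF G F).
Proof.
move=> x y; apply/existsP/existsP => -[e /andP[eF He]]; exists e; by rewrite eF orbC.
Qed.

Lemma sc_map_v K H u v : @sc_map K H u v v = inl u.
Proof. by rewrite /sc_map insubF // eqxx. Qed.

Lemma sc_map_val K H u v (y : {y : gV H | y != v}) : @sc_map K H u v (val y) = inr y.
Proof. by rewrite /sc_map valK. Qed.

Definition pr1 K H (u : gV K) (v : gV H) (x : sc_V K v) : gV K :=
  match x with inl a => a | inr _ => u end.
Definition pr2 K H (v : gV H) (x : sc_V K v) : gV H :=
  match x with inl _ => v | inr y => val y end.

Lemma pr1_sc K H u v z : pr1 u (@sc_map K H u v z) = u.
Proof. by rewrite /sc_map; case: insubP. Qed.

Lemma pr2_sc K H u v z : pr2 (@sc_map K H u v z) = z.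
Proof. by rewrite /sc_map; case: insubP => [y _ <- //|/negPn/eqP ->]. Qed.

Lemma series_conn K H u v (F : {set gE (@series K H u v)}) (FK : {set gE K})
  (FH : {set gE H}) :
  connectedF FK -> connectedF FH -> (forall e, e \in FK -> inl e \in F) ->
  (forall e, e \in FH -> inr e \in F) -> connectedF F.
Proof.
move=> cK cH sK sH.
have toU : forall x, connect (adjF F) x (inl u).
  case=> [a|y].
  - apply: (connect_homo (h := fun a : gV K => (inl a : gV (@series K H u v)))) (cK a u).
    move=> a' b' /existsP[e /andP[eF He]]; apply: connect1; apply/existsP.
    exists (inl e); rewrite sK //=; case/orP: He => /eqP He; by rewrite He eqxx ?orbT.
  - rewrite -(sc_map_val u y) -(sc_map_v u v).
    apply: (connect_homo (h := @sc_map K H u v)) (cH _ v) => a' b' /existsP[e /andP[eF He]].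
    apply: connect1; apply/existsP; exists (inr e); rewrite sH //=; case/orP: He => /eqP He; by rewrite He eqxx ?orbT.
move=> x y; apply: connect_trans (toU x) _.
rewrite (sym_connect_sym (@adjF_sym _ F)); exact: toU.
Qed.

Lemma series_tree K H u v (F : {set gE (@series K H u v)}) :
  spanning_tree [set e | inl e \in F] -> spanning_tree [set e | inr e \in F] ->
  spanning_tree F.
Proof.
move=> [cK bK] [cH bH]; split.
  by apply: (series_conn cK cH) => e; rewrite inE.
case=> [e1|e2] eF; apply/negP => C.
- have := bK e1; rewrite inE eF => /(_ isT)/negP; apply.
  move: C => /=.
  apply: (connect_homo (h := @pr1 K H u v)) (inl _) (inl _) => x y /existsP[[f1|f2] /andP[fF Hf]].
  + rewrite !inE /= in fF; case/andP: fF => ne fF.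
    apply: connect1; apply/existsP; exists f1; rewrite !inE ne fF /=.
    by case/orP: Hf => /eqP [<- <-] /=; rewrite -surjective_pairing eqxx ?orbT.
  + by case/orP: Hf => /eqP [<- <-]; rewrite !pr1_sc connect0.
- have := bH e2; rewrite inE eF => /(_ isT)/negP; apply.
  move: C => /=; rewrite -{2}(pr2_sc u v (gends e2).1) -{2}(pr2_sc u v (gends e2).2).
  apply: (connect_homo (h := @pr2 K H v)) => x y /existsP[[f1|f2] /andP[fF Hf]].
  + by case/orP: Hf => /eqP [<- <-]; rewrite connect0.
  + rewrite !inE /= in fF; case/andP: fF => ne fF.
    apply: connect1; apply/existsP; exists f2; rewrite !inE ne fF /=.
    by case/orP: Hf => /eqP [<- <-] /=; rewrite !pr2_sc -surjective_pairing eqxx ?orbT.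
Qed.
Definition inwin (M L i p : nat) : Prop := exists q, i <= p + q * M < i + L.

Lemma win_equiv M L i p : p < M -> i < M -> ((p + M - i) %% M < L) <-> inwin M L i p.
Proof.
move=> pM iM; case: (leqP i p) => ip.
- have -> : p + M - i = (p - i) + M by lia.
  rewrite modnDr modn_small; last by lia.
  split=> [H|[[|q] Hq]]; first by exists 0; lia.
  + lia.
  + rewrite mulSn in Hq; lia.
- rewrite modn_small; last by lia.
  split=> [H|[[|q] Hq]]; first by exists 1; rewrite mul1n; lia.
  + lia.
  + rewrite mulSn in Hq; lia.
Qed.

Lemma inwin_mod M L i p : 0 < M -> p < M -> inwin M L i p <-> inwin M L (i %% M) p.
Proof.
move=> M0 pM; rewrite {1}(divn_eq i M); set a := i %/ M; set b := i %% M.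
have bM : b < M by rewrite ltn_pmod.
split=> [[q Hq]|[q Hq]].
- have aq : a <= q.
    rewrite leqNgt; apply/negP => qa.
    have : q.+1 * M <= a * M by rewrite leq_mul2r qa orbT.
    rewrite mulSn; lia.
  have : a * M <= q * M by rewrite leq_mul2r aq orbT.
  exists (q - a); rewrite mulnBl; lia.
- exists (q + a); rewrite mulnDl; lia.
Qed.

Lemma lt_mulB B x y a : a < B -> x < y -> x * B + a < y * B.
Proof.
move=> aB xy; have : x.+1 * B <= y * B by rewrite leq_mul2r xy orbT.
rewrite mulSn; lia.
Qed.

Lemma lex B x y a b : a < B -> b < B ->
  (x * B + a <= y * B + b) = (x < y) || ((x == y) && (a <= b)).
Proof.
move=> aB bB; case: (ltngtP x y) => [xy|yx|->] /=.
- have := lt_mulB aB xy; lia.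
- have := lt_mulB bB yx; lia.
- by rewrite leq_add2l.
Qed.

Lemma lexlt B x y a b : a < B -> b < B ->
  (x * B + a < y * B + b) = (x < y) || ((x == y) && (a < b)).
Proof.
move=> aB bB; case: (ltngtP x y) => [xy|yx|->] /=.
- have := lt_mulB aB xy; lia.
- have := lt_mulB bB yx; lia.
- by rewrite ltn_add2l.
Qed.

Lemma stepK_pt k r J s j0 s0 : 0 < k -> s < k -> s0 <= k ->
  (j0 * k.+1 + s0 <= J * k.+1 + s < j0 * k.+1 + s0 + k.+1 * r) =
  (let iK := if s0 < k then j0 * k + s0 else j0.+1 * k in
   iK <= J * k + s < iK + k * r).
Proof.
move=> k0 sk s0k /=.
have sk1 : s < k.+1 by lia.
have s0k1 : s0 < k.+1 by lia.
have -> : j0 * k.+1 + s0 + k.+1 * r = (j0 + r) * k.+1 + s0 by lia.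
rewrite lexlt // lex //.
case: ifP => s0k'.
- have -> : j0 * k + s0 + k * r = (j0 + r) * k + s0 by lia.
  rewrite lexlt // lex //; lia.
- have -> : j0.+1 * k + k * r = (j0.+1 + r) * k + 0 by lia.
  rewrite -[j0.+1 * k]addn0 lexlt // lex //; lia.
Qed.

Lemma stepG_pt k r J j0 s0 : s0 <= k ->
  (j0 * k.+1 + s0 <= J * k.+1 + k < j0 * k.+1 + s0 + k.+1 * r) =
  (j0 <= J < j0 + r).
Proof.
move=> s0k.
have s0k1 : s0 < k.+1 by lia.
have kk1 : k < k.+1 by lia.
have -> : j0 * k.+1 + s0 + k.+1 * r = (j0 + r) * k.+1 + s0 by lia.
rewrite lexlt // lex //; lia.
Qed.

Lemma stepK k m r j s j0 s0 : 0 < k -> s < k -> s0 <= k ->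
  inwin (k.+1 * m) (k.+1 * r) (j0 * k.+1 + s0) (j * k.+1 + s) <->
  inwin (k * m) (k * r) (if s0 < k then j0 * k + s0 else j0.+1 * k) (j * k + s).
Proof.
move=> k0 sk s0k; split=> -[q Hq]; exists q.
- have E1 : j * k.+1 + s + q * (k.+1 * m) = (j + q * m) * k.+1 + s by lia.
  have E2 : j * k + s + q * (k * m) = (j + q * m) * k + s by lia.
  rewrite E1 stepK_pt // in Hq; by rewrite E2.
- have E1 : j * k.+1 + s + q * (k.+1 * m) = (j + q * m) * k.+1 + s by lia.
  have E2 : j * k + s + q * (k * m) = (j + q * m) * k + s by lia.
  rewrite E2 in Hq; by rewrite E1 stepK_pt.
Qed.

Lemma stepG k m r j j0 s0 : s0 <= k ->
  inwin (k.+1 * m) (k.+1 * r) (j0 * k.+1 + s0) (j * k.+1 + k) <->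
  inwin m r j0 j.
Proof.
move=> s0k; split=> -[q Hq]; exists q.
- have E1 : j * k.+1 + k + q * (k.+1 * m) = (j + q * m) * k.+1 + k by lia.
  by rewrite E1 stepG_pt in Hq.
- have E1 : j * k.+1 + k + q * (k.+1 * m) = (j + q * m) * k.+1 + k by lia.
  by rewrite E1 stepG_pt.
Qed.

Definition good (G : graph) (M L : nat) (P : gE G -> nat) : Prop :=
  [/\ injective P, (forall e, P e < M) &
      forall i (F : {set gE G}), (forall e, e \in F <-> inwin M L i (P e)) ->
      spanning_tree F].

Lemma base_good G : cyclically_orderable G ->
  exists P, @good G #|gE G| #|gV G|.-1 P.
Proof.
move=> [cG [O [bijO Hw]]].
exists (fun e => val (O e)); split.
- by move=> a b /val_inj /(bij_inj bijO).
- by move=> e; exact: ltn_ord.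
move=> i F HF.
case: (posnP #|gE G|) => M0.
  have FT : F = setT.
    by apply/setP => e; have := ltn_ord (O e); rewrite {2}M0.
  split; first by rewrite FT.
  by move=> e; have := ltn_ord (O e); rewrite {2}M0.
have -> : F = window O (Ordinal (ltn_pmod i M0)).
  apply/setP => e; rewrite inE; apply/idP/idP.
  - move/HF/(inwin_mod _ _ M0 (ltn_ord _)) => H.
    exact/(win_equiv _ (ltn_ord _) (ltn_ord (Ordinal (ltn_pmod i M0)))).
  - move/(win_equiv _ (ltn_ord _) (ltn_ord (Ordinal (ltn_pmod i M0)))) => H.
    exact/HF/(inwin_mod _ _ M0 (ltn_ord _)).
exact: Hw.
Qed.

Definition Qpos (K H : graph) (u : gV K) (v : gV H) (k : nat)
  (PK : gE K -> nat) (PG : gE H -> nat) (e : gE (series u v)) : nat :=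
  match e with
  | inl e1 => (PK e1 %/ k) * k.+1 + PK e1 %% k
  | inr e2 => PG e2 * k.+1 + k
  end.

Lemma divmodB B x s : s < B -> (x * B + s) %/ B = x /\ (x * B + s) %% B = s.
Proof.
move=> sB; have B0 : 0 < B by lia.
by rewrite divnMDl // divn_small // addn0 modnMDl modn_small.
Qed.

Lemma step_good K H (u : gV K) (v : gV H) k m r PK PG :
  0 < k -> @good K (k * m) (k * r) PK -> @good H m r PG ->
  @good (series u v) (k.+1 * m) (k.+1 * r) (@Qpos K H u v k PK PG).
Proof.
move=> k0 [iK bK wK] [iG bG wG]; split.
- have sk : forall e, PK e %% k < k.+1 by move=> e; have := ltn_pmod (PK e) k0; lia.
  move=> [a|a] [b|b] /= E.
  + have [Ea1 Ea2] := divmodB (PK a %/ k) (sk a).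
    have [Eb1 Eb2] := divmodB (PK b %/ k) (sk b).
    rewrite E in Ea1 Ea2; rewrite Ea1 in Eb1; rewrite Ea2 in Eb2.
    by rewrite (iK a b) // (divn_eq (PK a) k) Eb1 Eb2 -divn_eq.
  + have [_ Ea2] := divmodB (PK a %/ k) (sk a).
    have [_ Eb2] := divmodB (PG b) (ltnSn k).
    rewrite E Eb2 in Ea2; have := ltn_pmod (PK a) k0; lia.
  + have [_ Ea2] := divmodB (PK b %/ k) (sk b).
    have [_ Eb2] := divmodB (PG a) (ltnSn k).
    rewrite -E Eb2 in Ea2; have := ltn_pmod (PK b) k0; lia.
  + have [Ea1 _] := divmodB (PG a) (ltnSn k).
    have [Eb1 _] := divmodB (PG b) (ltnSn k).
    by rewrite E Eb1 in Ea1; rewrite (iG a b) // Ea1.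
- move=> [e|e] /=.
  + have jm : PK e %/ k < m by rewrite ltn_divLR // mulnC.
    have := lt_mulB (ltn_pmod (PK e) k0) jm.
    have : m * k <= m * k.+1 by rewrite leq_mul2l; lia.
    rewrite mulnC; lia.
  + have := lt_mulB (ltnSn k) (bG e); rewrite mulnC; lia.
move=> i F HF.
have s0k : i %% k.+1 <= k by have := ltn_pmod i (ltn0Sn k); lia.
have Ei : i = i %/ k.+1 * k.+1 + i %% k.+1 := divn_eq i k.+1.
apply: series_tree.
- apply: (wK (if i %% k.+1 < k then i %/ k.+1 * k + i %% k.+1 else (i %/ k.+1).+1 * k)).
  move=> e; rewrite inE HF /=.
  have := stepK m r (PK e %/ k) (i %/ k.+1) k0 (ltn_pmod (PK e) k0) s0k.
  by rewrite -!divn_eq.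
- apply: (wG (i %/ k.+1)) => e; rewrite inE HF /=.
  have := stepG m r (PG e) (i %/ k.+1) s0k.
  by rewrite -!divn_eq.
Qed.

Lemma main_ind t (Gs : nat -> graph) (m r : nat) :
  m = #|gE (Gs 0)| -> r = #|gV (Gs 0)|.-1 ->
  (forall i, (i < t)%N -> cyclically_orderable (Gs i)) ->
  (forall i, (i < t)%N -> #|gV (Gs i)| = #|gV (Gs 0)|) ->
  (forall i, (i < t)%N -> #|gE (Gs i)| = #|gE (Gs 0)|) ->
  forall n K, iter_series Gs n K -> n <= t ->
  [/\ 0 < n, connected_graph K, #|gE K| = n * m, #|gV K|.-1 = n * r &
      exists P, @good K (n * m) (n * r) P].
Proof.
move=> Em Er CO EV EE n K; elim=> [|n' K' u v _ IH] nt.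
- have [cG _] := CO 0 nt.
  have [P gP] := base_good (CO 0 nt).
  subst m r; rewrite !mul1n; split => //; exists P; exact: gP.
- have [n0 cK EK VK [P gP]] := IH (ltnW nt).
  have [cG _] := CO n' nt.
  have [PG gG] := base_good (CO n' nt).
  rewrite EV // EE // -Em -Er in gG.
  split => //.
  + by rewrite /connected_graph; apply: (series_conn cK cG); move=> e _; rewrite in_setT.
  + rewrite /= card_sum EK EE // -Em mulSn; lia.
  + have u0 : 0 < #|gV K'| by apply/card_gt0P; exists u.
    have ES : #|gV (series u v)| = #|gV K'| + #|gV (Gs n')|.-1.
      rewrite /= /sc_V card_sum card_sig -(cardC1 v); congr (_ + _); try (apply: eq_card => y; by rewrite !inE).
    rewrite ES EV // -Er; move: VK; rewrite mulSn; lia.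
  + by exists (@Qpos K' (Gs n') u v n' P PG); apply: step_good.
Qed.

Theorem mainTheorem4 (t : nat) (Gs : nat -> graph) (K : graph) :
  (2 <= t)%N ->
  (forall i, (i < t)%N -> cyclically_orderable (Gs i)) ->
  (forall i, (i < t)%N -> #|gV (Gs i)| = #|gV (Gs 0)|) ->
  (forall i, (i < t)%N -> #|gE (Gs i)| = #|gE (Gs 0)|) ->
  iter_series Gs t K ->
  cyclically_orderable K.
Proof.
move=> t2 CO EV EE IS.
have [_ cK EK VK [P [iP bP wP]]] := main_ind erefl erefl CO EV EE IS (leqnn t).
rewrite -EK -VK in bP wP.
split => //.
have PB : forall e, P e < #|gE K| by [].
exists (fun e => Ordinal (PB e)); split.
- apply: inj_card_bij; last by rewrite card_ord.
  by move=> a b /(congr1 val) /iP.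
move=> i; apply: wP => e; rewrite inE.
exact: (win_equiv _ (PB e) (ltn_ord i)).
Qed.
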